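(* Let $P,Q\in C^{\infty}(\mathbb{R}^{2})$ be real-valued, and consider the planar vector field $x'=P(x,y),\ y'=Q(x,y)$ together with the first-order differential operator $D$ on $C^{\infty}(\mathbb{R}^{2})$ (complex-valued smooth functions) given by $D(U)=PU_{x}+QU_{y}$. Let $A$ be a self-adjoint subalgebra of $C^{\infty}(\mathbb{R}^{2})$ which separates compact submanifolds of $\mathbb{R}^{2}$, and assume $D(A)\subseteq A$. Then the number of closed orbits (periodic solutions) of the vector field is less than or equal to the codimension of the range $D(A)$ in $A$, i.e. $\dim_{\mathbb{C}} A/D(A)$.
   Context: A subalgebra $A\subseteq C^{\infty}(\mathbb{R}^{2})$ is self-adjoint if it is closed under complex conjugation. $A$ separates compact submanifolds of $\mathbb{R}^{2}$ if for every finite collection of pairwise disjoint smooth closed curves $\gamma_{1},\ldots,\gamma_{n}$ in $\mathbb{R}^{2}$ there exists a real-valued $f\in A$ such that $f(x_{i})\neq f(x_{j})$ for all $x_{i}\in\gamma_{i}$, $x_{j}\in\gamma_{j}$ with $i\neq j$. *)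

(* Defs.v *)
From Stdlib Require Import Reals.
From Coquelicot Require Import Coquelicot.
Open Scope R_scope.

Definition R2 := (R * R)%type.

Definition pdx (f : R -> R -> R) : R -> R -> R := fun x y => Derive (fun t => f t y) x.
Definition pdy (f : R -> R -> R) : R -> R -> R := fun x y => Derive (fun t => f x t) y.

Fixpoint Ck (k : nat) (f : R -> R -> R) : Prop :=
  match k with
  | O => forall p : R2, continuous (fun q : R2 => f (fst q) (snd q)) p
  | S k' => (forall p : R2, continuous (fun q : R2 => f (fst q) (snd q)) p)
            /\ (forall x y, ex_derive (fun t => f t y) x /\ ex_derive (fun t => f x t) y)
            /\ Ck k' (pdx f) /\ Ck k' (pdy f)
  end.

Definition smooth2 (f : R -> R -> R) : Prop := forall k, Ck k f.

Definition smooth1 (g : R -> R) : Prop := forall n x, ex_derive_n g n x.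

Definition Cfun := R -> R -> C.

Definition smoothC (U : Cfun) : Prop :=
  smooth2 (fun x y => Re (U x y)) /\ smooth2 (fun x y => Im (U x y)).

Definition pdxC (U : Cfun) : Cfun := fun x y =>
  (pdx (fun a b => Re (U a b)) x y, pdx (fun a b => Im (U a b)) x y).
Definition pdyC (U : Cfun) : Cfun := fun x y =>
  (pdy (fun a b => Re (U a b)) x y, pdy (fun a b => Im (U a b)) x y).

Definition Dop (P Q : R -> R -> R) (U : Cfun) : Cfun := fun x y =>
  Cplus (Cmult (RtoC (P x y)) (pdxC U x y)) (Cmult (RtoC (Q x y)) (pdyC U x y)).

Definition is_subalgebra (A : Cfun -> Prop) : Prop :=
  (forall U, A U -> smoothC U)
  /\ A (fun _ _ => RtoC 1)
  /\ (forall U V, A U -> A V -> A (fun x y => Cplus (U x y) (V x y)))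
  /\ (forall (c : C) U, A U -> A (fun x y => Cmult c (U x y)))
  /\ (forall U V, A U -> A V -> A (fun x y => Cmult (U x y) (V x y))).

Definition self_adjoint (A : Cfun -> Prop) : Prop :=
  forall U, A U -> A (fun x y => Cconj (U x y)).

(* S is (the image of) a smooth closed curve: an embedded smooth circle,
   given by a T-periodic immersion injective on [0,T) *)
Definition smooth_closed_curve (S : R2 -> Prop) : Prop :=
  exists (gx gy : R -> R) (T : R),
    0 < T /\ smooth1 gx /\ smooth1 gy
    /\ (forall t, gx (t + T) = gx t /\ gy (t + T) = gy t)
    /\ (forall s t, 0 <= s < T -> 0 <= t < T -> gx s = gx t -> gy s = gy t -> s = t)
    /\ (forall t, Derive gx t <> 0 \/ Derive gy t <> 0)
    /\ (forall p : R2, S p <-> exists t, p = (gx t, gy t)).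

Definition separates_compact_submanifolds (A : Cfun -> Prop) : Prop :=
  forall (n : nat) (S : nat -> R2 -> Prop),
    (forall i, (i < n)%nat -> smooth_closed_curve (S i)) ->
    (forall i j, (i < n)%nat -> (j < n)%nat -> i <> j -> forall p, ~ (S i p /\ S j p)) ->
    exists f : Cfun, A f /\ (forall x y, Im (f x y) = 0) /\
      (forall i j, (i < n)%nat -> (j < n)%nat -> i <> j ->
         forall p q : R2, S i p -> S j q -> f (fst p) (snd p) <> f (fst q) (snd q)).

Definition closed_orbit (P Q : R -> R -> R) (O : R2 -> Prop) : Prop :=
  exists (x y : R -> R) (T : R),
    0 < T
    /\ (forall t, is_derive x t (P (x t) (y t)) /\ is_derive y t (Q (x t) (y t)))
    /\ (forall t, x (t + T) = x t /\ y (t + T) = y t)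
    /\ (exists t, (x t, y t) <> (x 0, y 0))
    /\ (forall p : R2, O p <-> exists t, p = (x t, y t)).

Fixpoint csum (n : nat) (f : nat -> C) : C :=
  match n with
  | O => RtoC 0
  | S m => Cplus (csum m f) (f m)
  end.

(* Main.v *)
Require Import Defs.
From Stdlib Require Import Reals Lra Lia Classical IndefiniteDescription.
From Coquelicot Require Import Coquelicot.
Open Scope R_scope.

Definition cont2 (f : R -> R -> R) := forall p : R2, continuous (fun q : R2 => f (fst q) (snd q)) p.

Lemma cont2_iff f : cont2 f <-> forall x y, continuity_2d_pt f x y.
Proof.
  split.
  - intros H x y. apply continuity_2d_pt_filterlim. exact (H (x,y)).
  - intros H [x y]. apply (proj1 (continuity_2d_pt_filterlim f x y)). apply H.
Qed.

Lemma Ck0_intro f : cont2 f -> Ck 0 f.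
Proof. auto. Qed.
Lemma CkS_intro k f : cont2 f -> (forall x y, ex_derive (fun t => f t y) x /\ ex_derive (fun t => f x t) y) ->
  Ck k (pdx f) -> Ck k (pdy f) -> Ck (S k) f.
Proof. intros; simpl; auto. Qed.
Lemma cont2_of f : (forall x y, continuity_2d_pt f x y) -> cont2 f.
Proof. apply (proj2 (cont2_iff f)). Qed.

Lemma Ck_cont k f : Ck k f -> cont2 f.
Proof. destruct k; simpl; tauto. Qed.

Lemma Ck_ext : forall k f g, (forall x y, f x y = g x y) -> Ck k f -> Ck k g.
Proof.
  induction k; intros f g E H.
  - apply Ck0_intro, cont2_of. intros x y.
    apply continuity_2d_pt_ext with f; auto. apply (proj1 (cont2_iff f)); exact H.
  - destruct H as [H1 [H2 [H3 H4]]]. apply CkS_intro.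
    + apply cont2_of. intros x y.
      apply continuity_2d_pt_ext with f; auto. apply (proj1 (cont2_iff f)); exact H1.
    + intros x y. destruct (H2 x y) as [A B]. split.
      * apply ex_derive_ext with (fun t => f t y); auto.
      * apply ex_derive_ext with (fun t => f x t); auto.
    + apply IHk with (pdx f); auto. intros x y; unfold pdx. apply Derive_ext; auto.
    + apply IHk with (pdy f); auto. intros x y; unfold pdy. apply Derive_ext; auto.
Qed.

Lemma Ck_S : forall k f, Ck (S k) f -> Ck k f.
Proof.
  induction k; intros f H.
  - simpl in *. tauto.
  - destruct H as [H1 [H2 [H3 H4]]]. apply CkS_intro; auto.
Qed.

Lemma smooth2_pdx f : smooth2 f -> smooth2 (pdx f).
Proof. intros H k. destruct (H (S k)) as [_ [_ [A _]]]. exact A. Qed.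
Lemma smooth2_pdy f : smooth2 f -> smooth2 (pdy f).
Proof. intros H k. destruct (H (S k)) as [_ [_ [_ A]]]. exact A. Qed.
Lemma smooth2_exx f x y : smooth2 f -> ex_derive (fun t => f t y) x.
Proof. intros H. destruct (H 1%nat) as [_ [A _]]. exact (proj1 (A x y)). Qed.
Lemma smooth2_exy f x y : smooth2 f -> ex_derive (fun t => f x t) y.
Proof. intros H. destruct (H 1%nat) as [_ [A _]]. exact (proj2 (A x y)). Qed.
Lemma smooth2_cont f x y : smooth2 f -> continuity_2d_pt f x y.
Proof. intros H. apply (proj1 (cont2_iff f)). apply (Ck_cont 0 f (H 0%nat)). Qed.

Lemma Ck_const : forall k c, Ck k (fun _ _ => c).
Proof.
  induction k; intros c.
  - apply Ck0_intro, cont2_of. intros; apply continuity_2d_pt_const.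
  - apply CkS_intro.
    + apply cont2_of. intros; apply continuity_2d_pt_const.
    + intros; split; apply ex_derive_const.
    + apply Ck_ext with (fun _ _ => 0). intros; unfold pdx; rewrite Derive_const; auto. apply IHk.
    + apply Ck_ext with (fun _ _ => 0). intros; unfold pdy; rewrite Derive_const; auto. apply IHk.
Qed.

Lemma Ck_proj1 : forall k, Ck k (fun a _ => a).
Proof.
  induction k.
  - apply Ck0_intro, cont2_of. intros; apply continuity_2d_pt_id1.
  - apply CkS_intro.
    + apply cont2_of. intros; apply continuity_2d_pt_id1.
    + intros; split. apply ex_derive_id. apply ex_derive_const.
    + apply Ck_ext with (fun _ _ => 1). intros; unfold pdx; rewrite Derive_id; auto. apply Ck_const.
    + apply Ck_ext with (fun _ _ => 0). intros; unfold pdy; rewrite Derive_const; auto. apply Ck_const.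
Qed.

Lemma Ck_proj2 : forall k, Ck k (fun _ b => b).
Proof.
  induction k.
  - apply Ck0_intro, cont2_of. intros; apply continuity_2d_pt_id2.
  - apply CkS_intro.
    + apply cont2_of. intros; apply continuity_2d_pt_id2.
    + intros; split. apply ex_derive_const. apply ex_derive_id.
    + apply Ck_ext with (fun _ _ => 0). intros; unfold pdx; rewrite Derive_const; auto. apply Ck_const.
    + apply Ck_ext with (fun _ _ => 1). intros; unfold pdy; rewrite Derive_id; auto. apply Ck_const.
Qed.

Lemma Ck_plus : forall k f g, Ck k f -> Ck k g -> Ck k (fun x y => f x y + g x y).
Proof.
  induction k; intros f g Hf Hg.
  - apply Ck0_intro, cont2_of. intros; apply continuity_2d_pt_plus;
    apply (proj1 (cont2_iff _)); auto.
  - destruct Hf as [F1 [F2 [F3 F4]]]. destruct Hg as [G1 [G2 [G3 G4]]].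
    apply CkS_intro.
    + apply cont2_of. intros; apply continuity_2d_pt_plus;
      apply (proj1 (cont2_iff _)); auto.
    + intros x y. destruct (F2 x y) as [a1 a2], (G2 x y) as [b1 b2]. split. exact (ex_derive_plus _ _ _ a1 b1). exact (ex_derive_plus _ _ _ a2 b2).
    + apply Ck_ext with (fun x y => pdx f x y + pdx g x y).
      intros x y; unfold pdx. symmetry. exact (Derive_plus (fun t => f t y) (fun t => g t y) x (proj1 (F2 x y)) (proj1 (G2 x y))).
      apply IHk; auto.
    + apply Ck_ext with (fun x y => pdy f x y + pdy g x y).
      intros x y; unfold pdy. symmetry. exact (Derive_plus (fun t => f x t) (fun t => g x t) y (proj2 (F2 x y)) (proj2 (G2 x y))).
      apply IHk; auto.
Qed.

Lemma Ck_mult : forall k f g, Ck k f -> Ck k g -> Ck k (fun x y => f x y * g x y).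
Proof.
  induction k; intros f g Hf Hg.
  - apply Ck0_intro, cont2_of. intros; apply continuity_2d_pt_mult;
    apply (proj1 (cont2_iff _)); auto.
  - assert (Hf' := Ck_S _ _ Hf). assert (Hg' := Ck_S _ _ Hg).
    destruct Hf as [F1 [F2 [F3 F4]]]. destruct Hg as [G1 [G2 [G3 G4]]].
    apply CkS_intro.
    + apply cont2_of. intros; apply continuity_2d_pt_mult;
      apply (proj1 (cont2_iff _)); auto.
    + intros x y. destruct (F2 x y) as [a1 a2], (G2 x y) as [b1 b2]. split. exact (ex_derive_mult _ _ _ a1 b1). exact (ex_derive_mult _ _ _ a2 b2).
    + apply Ck_ext with (fun x y => pdx f x y * g x y + f x y * pdx g x y).
      intros x y; unfold pdx. symmetry. exact (Derive_mult (fun t => f t y) (fun t => g t y) x (proj1 (F2 x y)) (proj1 (G2 x y))).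
      apply Ck_plus; apply IHk; auto.
    + apply Ck_ext with (fun x y => pdy f x y * g x y + f x y * pdy g x y).
      intros x y; unfold pdy. symmetry. exact (Derive_mult (fun t => f x t) (fun t => g x t) y (proj2 (F2 x y)) (proj2 (G2 x y))).
      apply Ck_plus; apply IHk; auto.
Qed.

Lemma smooth2_plus f g : smooth2 f -> smooth2 g -> smooth2 (fun x y => f x y + g x y).
Proof. intros; intro k; apply Ck_plus; auto. Qed.
Lemma smooth2_mult f g : smooth2 f -> smooth2 g -> smooth2 (fun x y => f x y * g x y).
Proof. intros; intro k; apply Ck_mult; auto. Qed.
Lemma smooth2_ext f g : (forall x y, f x y = g x y) -> smooth2 f -> smooth2 g.
Proof. intros E H k; apply Ck_ext with f; auto. Qed.

Lemma Ck_diff : forall k f x y, Ck k f -> ex_diff_n f k x y.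
Proof.
  induction k; intros f x y H.
  - simpl. split; auto. apply (proj1 (cont2_iff _)). exact H.
  - simpl in H. destruct H as [H1 [H2 [H3 H4]]]. simpl. split; [|split; [|split; [|split]]].
    + apply (proj1 (cont2_iff _)). exact H1.
    + exact (proj1 (H2 x y)).
    + exact (proj2 (H2 x y)).
    + apply (IHk (pdx f)). exact H3.
    + apply (IHk (pdy f)). exact H4.
Qed.

Lemma smooth2_differentiable f x y : smooth2 f ->
  differentiable_pt_lim f x y (pdx f x y) (pdy f x y).
Proof.
  intros H.
  destruct (Taylor_Lagrange_2d f 1 x y) as [D HD].
  { exists (mkposreal 1 Rlt_0_1). intros; apply Ck_diff; apply H. }
  intros eps.
  destruct HD as [d Hd].
  assert (HD0 : 0 <= Rmax D 1) by (apply Rle_trans with 1; [lra| apply Rmax_r]).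
  assert (Hpos : 0 < Rmin d (eps / (Rmax D 1 + 1))).
  { apply Rmin_pos. apply cond_pos. apply Rdiv_lt_0_compat. apply cond_pos. lra. }
  exists (mkposreal _ Hpos). intros u v Hu Hv. simpl in Hu, Hv.
  assert (Hu1 : Rabs (u - x) < d) by (eapply Rlt_le_trans; [exact Hu| apply Rmin_l]).
  assert (Hv1 : Rabs (v - y) < d) by (eapply Rlt_le_trans; [exact Hv| apply Rmin_l]).
  specialize (Hd u v Hu1 Hv1).
  unfold DL_pol in Hd. simpl in Hd. unfold differential in Hd. simpl in Hd.
  unfold partial_derive in Hd. simpl in Hd. unfold Binomial.C in Hd. simpl in Hd.
  assert (Hu2 : Rabs (u - x) < eps / (Rmax D 1 + 1)) by (eapply Rlt_le_trans; [exact Hu| apply Rmin_r]).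
  assert (Hv2 : Rabs (v - y) < eps / (Rmax D 1 + 1)) by (eapply Rlt_le_trans; [exact Hv| apply Rmin_r]).
  set (m := Rmax (Rabs (u - x)) (Rabs (v - y))) in *.
  assert (Hm0 : 0 <= m) by (unfold m; apply Rle_trans with (Rabs (u-x)); [apply Rabs_pos|apply Rmax_l]).
  assert (Hm : m <= eps / (Rmax D 1 + 1)).
  { unfold m. apply Rmax_lub; apply Rlt_le; assumption. }
  replace (f u v - f x y - (pdx f x y * (u - x) + pdy f x y * (v - y))) with
    (f u v - (1 / (1 * 1) * f x y * 1 * 1 / 1 +
      (1 / (1 * 1) * Derive (fun x0 : R => f x x0) y * 1 * ((v - y) * 1) +
       1 / (1 * 1) * Derive (fun x0 : R => f x0 y) x * ((u - x) * 1) * 1) / 1)).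
  2:{ unfold pdx, pdy. field. }
  eapply Rle_trans; [exact Hd|].
  assert (D <= Rmax D 1) by apply Rmax_l.
  assert (Hk : m * (Rmax D 1 + 1) <= eps).
  { apply Rmult_le_reg_r with (/ (Rmax D 1 + 1)). apply Rinv_0_lt_compat; lra.
    rewrite Rmult_assoc, Rinv_r by lra. rewrite Rmult_1_r. exact Hm. }
  assert (0 < eps) by apply cond_pos.
  simpl. nra.
Qed.

Lemma chain2 g X Y t dx dy : smooth2 g -> is_derive X t dx -> is_derive Y t dy ->
  is_derive (fun s => g (X s) (Y s)) t (pdx g (X t) (Y t) * dx + pdy g (X t) (Y t) * dy).
Proof.
  intros Hg HX HY. apply is_derive_Reals.
  apply derivable_pt_lim_comp_2d.
  - apply smooth2_differentiable; auto.
  - apply is_derive_Reals; auto.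
  - apply is_derive_Reals; auto.
Qed.

Lemma cont_eps f x : ex_derive f x -> forall eps, 0 < eps ->
  exists d, 0 < d /\ forall u, Rabs (u - x) < d -> Rabs (f u - f x) < eps.
Proof.
  intros H eps He.
  assert (C1 : continuity_pt f x).
  { apply continuity_pt_filterlim. apply (ex_derive_continuous f x H). }
  destruct (proj1 (continuity_pt_locally f x) C1 (mkposreal eps He)) as [d Hd].
  exists d. split. apply cond_pos. intros u Hu. apply Hd. exact Hu.
Qed.

Lemma cont_pt_of_ex f x : ex_derive f x -> continuity_pt f x.
Proof. intros H. apply continuity_pt_filterlim. apply (ex_derive_continuous f x H). Qed.

Lemma mvt_bound (f : R -> R) (K a b : R) :
  (forall t, Rmin a b <= t <= Rmax a b -> ex_derive f t /\ Rabs (Derive f t) <= K) ->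
  Rabs (f b - f a) <= K * Rabs (b - a).
Proof.
  intros H.
  destruct (MVT_gen f a b (Derive f)) as [c [Hc E]].
  - intros t Ht. apply Derive_correct. apply H. lra.
  - intros t Ht. apply cont_pt_of_ex. apply H. exact Ht.
  - rewrite E, Rabs_mult. apply Rmult_le_compat_r. apply Rabs_pos. apply H. exact Hc.
Qed.

Definition LL (F : R -> R -> R) := forall a b, exists d L, 0 < d /\ 0 <= L /\
  forall u1 v1 u2 v2, Rabs (u1 - a) < d -> Rabs (v1 - b) < d -> Rabs (u2 - a) < d -> Rabs (v2 - b) < d ->
  Rabs (F u1 v1 - F u2 v2) <= L * (Rabs (u1 - u2) + Rabs (v1 - v2)).

Lemma smooth2_LL F : smooth2 F -> LL F.
Proof.
  intros H a b.
  destruct (smooth2_cont (pdx F) a b (smooth2_pdx F H) (mkposreal 1 Rlt_0_1)) as [d1 H1].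
  destruct (smooth2_cont (pdy F) a b (smooth2_pdy F H) (mkposreal 1 Rlt_0_1)) as [d2 H2].
  simpl in H1, H2.
  exists (Rmin d1 d2), (Rabs (pdx F a b) + Rabs (pdy F a b) + 2).
  split. apply Rmin_pos; apply cond_pos.
  split. assert (0 <= Rabs (pdx F a b)) by apply Rabs_pos. assert (0 <= Rabs (pdy F a b)) by apply Rabs_pos. lra.
  intros u1 v1 u2 v2 Hu1 Hv1 Hu2 Hv2.
  assert (Hm1 := Rmin_l d1 d2). assert (Hm2 := Rmin_r d1 d2).
  assert (A1 : Rabs (F u1 v1 - F u2 v1) <= (Rabs (pdx F a b) + 1) * Rabs (u1 - u2)).
  { apply (mvt_bound (fun t => F t v1)). intros t Ht. split. apply smooth2_exx; auto.
    assert (Rabs (t - a) < d1).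
    { apply Rabs_def2 in Hu1; apply Rabs_def2 in Hu2. apply Rabs_def1;
      unfold Rmin, Rmax in Ht; destruct (Rle_dec u2 u1); lra. }
    assert (Rabs (v1 - b) < d1) by lra.
    specialize (H1 t v1 H0 H3). change (Derive (fun t0 => F t0 v1) t) with (pdx F t v1).
    apply Rabs_def2 in H1. destruct H1.
    destruct (Rle_dec 0 (pdx F a b)); [rewrite (Rabs_pos_eq (pdx F a b)) by lra | rewrite (Rabs_left (pdx F a b)) by lra];
    (apply Rabs_le; lra). }
  assert (A2 : Rabs (F u2 v1 - F u2 v2) <= (Rabs (pdy F a b) + 1) * Rabs (v1 - v2)).
  { apply (mvt_bound (fun t => F u2 t)). intros t Ht. split. apply smooth2_exy; auto.
    assert (Rabs (t - b) < d2).
    { apply Rabs_def2 in Hv1; apply Rabs_def2 in Hv2. apply Rabs_def1;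
      unfold Rmin, Rmax in Ht; destruct (Rle_dec v2 v1); lra. }
    assert (Rabs (u2 - a) < d2) by lra.
    specialize (H2 u2 t H3 H0). change (Derive (fun t0 => F u2 t0) t) with (pdy F u2 t).
    apply Rabs_def2 in H2. destruct H2.
    destruct (Rle_dec 0 (pdy F a b)); [rewrite (Rabs_pos_eq (pdy F a b)) by lra | rewrite (Rabs_left (pdy F a b)) by lra];
    (apply Rabs_le; lra). }
  replace (F u1 v1 - F u2 v2) with ((F u1 v1 - F u2 v1) + (F u2 v1 - F u2 v2)) by ring.
  eapply Rle_trans. apply Rabs_triang.
  assert (0 <= Rabs (u1 - u2)) by apply Rabs_pos. assert (0 <= Rabs (v1 - v2)) by apply Rabs_pos.
  assert (0 <= Rabs (pdx F a b)) by apply Rabs_pos. assert (0 <= Rabs (pdy F a b)) by apply Rabs_pos.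
  nra.
Qed.

Definition sol (P Q : R -> R -> R) (x y : R -> R) :=
  forall t, is_derive x t (P (x t) (y t)) /\ is_derive y t (Q (x t) (y t)).

Lemma sol_ex P Q x y t : sol P Q x y -> ex_derive x t /\ ex_derive y t.
Proof. intros H. destruct (H t) as [A B]. split; eexists; eauto. Qed.

Lemma fwd_local P Q x1 y1 x2 y2 t0 : LL P -> LL Q -> sol P Q x1 y1 -> sol P Q x2 y2 ->
  x1 t0 = x2 t0 -> y1 t0 = y2 t0 ->
  exists e, 0 < e /\ forall t, t0 <= t <= t0 + e -> x1 t = x2 t /\ y1 t = y2 t.
Proof.
  intros HP HQ S1 S2 Ex Ey.
  destruct (HP (x1 t0) (y1 t0)) as [d1 [L1 [Hd1 [HL1 LP]]]].
  destruct (HQ (x1 t0) (y1 t0)) as [d2 [L2 [Hd2 [HL2 LQ]]]].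
  set (d := Rmin d1 d2). assert (Hd : 0 < d) by (apply Rmin_pos; auto).
  set (L := Rmax L1 L2).
  assert (HLa := Rmax_l L1 L2). assert (HLb := Rmax_r L1 L2). fold L in HLa, HLb.
  destruct (cont_eps x1 t0 (proj1 (sol_ex _ _ _ _ t0 S1)) d Hd) as [e1 [He1 C1]].
  destruct (cont_eps y1 t0 (proj2 (sol_ex _ _ _ _ t0 S1)) d Hd) as [e2 [He2 C2]].
  destruct (cont_eps x2 t0 (proj1 (sol_ex _ _ _ _ t0 S2)) d Hd) as [e3 [He3 C3]].
  destruct (cont_eps y2 t0 (proj2 (sol_ex _ _ _ _ t0 S2)) d Hd) as [e4 [He4 C4]].
  set (e := Rmin (Rmin e1 e2) (Rmin e3 e4) / 2).
  assert (He : 0 < e) by (unfold e; apply Rdiv_lt_0_compat; [repeat apply Rmin_pos; auto| lra]).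
  assert (Hee : forall t, t0 <= t <= t0 + e -> Rabs (t - t0) < e1 /\ Rabs (t - t0) < e2 /\ Rabs (t - t0) < e3 /\ Rabs (t - t0) < e4).
  { intros t Ht. assert (Rabs (t - t0) <= e) by (rewrite Rabs_pos_eq; lra).
    assert (HH := Rmin_l (Rmin e1 e2) (Rmin e3 e4)). assert (HH2 := Rmin_r (Rmin e1 e2) (Rmin e3 e4)).
    assert (Rmin e1 e2 <= e1) by apply Rmin_l. assert (Rmin e1 e2 <= e2) by apply Rmin_r.
    assert (Rmin e3 e4 <= e3) by apply Rmin_l. assert (Rmin e3 e4 <= e4) by apply Rmin_r.
    assert (0 < Rmin (Rmin e1 e2) (Rmin e3 e4)) by (repeat apply Rmin_pos; auto).
    unfold e in H. repeat split; lra. }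
  assert (Hdd1 := Rmin_l d1 d2). assert (Hdd2 := Rmin_r d1 d2). fold d in Hdd1, Hdd2.
  set (w := fun t => (x1 t - x2 t)^2 + (y1 t - y2 t)^2).
  set (g := fun t => w t * exp (- (4 * L) * t)).
  set (dw := fun t => 2 * (x1 t - x2 t) * (P (x1 t) (y1 t) - P (x2 t) (y2 t))
                     + 2 * (y1 t - y2 t) * (Q (x1 t) (y1 t) - Q (x2 t) (y2 t))).
  assert (Dg : forall t, is_derive g t ((dw t - 4 * L * w t) * exp (- (4 * L) * t))).
  { intros t. destruct (S1 t) as [a1 b1]. destruct (S2 t) as [a2 b2].
    assert (k1 : Derive (fun s => x1 s) t = P (x1 t) (y1 t)) by exact (is_derive_unique _ _ _ a1).
    assert (k2 : Derive (fun s => y1 s) t = Q (x1 t) (y1 t)) by exact (is_derive_unique _ _ _ b1).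
    assert (k3 : Derive (fun s => x2 s) t = P (x2 t) (y2 t)) by exact (is_derive_unique _ _ _ a2).
    assert (k4 : Derive (fun s => y2 s) t = Q (x2 t) (y2 t)) by exact (is_derive_unique _ _ _ b2).
    unfold g, w. auto_derive.
    - repeat split; eexists; eauto.
    - unfold dw, w. rewrite k1, k2, k3, k4. ring. }
  assert (Bd : forall t, t0 <= t <= t0 + e -> dw t <= 4 * L * w t).
  { intros t Ht. destruct (Hee t Ht) as [i1 [i2 [i3 i4]]].
    specialize (C1 t i1). specialize (C2 t i2). specialize (C3 t i3). specialize (C4 t i4).
    rewrite <- Ex in C3. rewrite <- Ey in C4.
    assert (p1 := LP (x1 t) (y1 t) (x2 t) (y2 t) ltac:(lra) ltac:(lra) ltac:(lra) ltac:(lra)).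
    assert (q1 := LQ (x1 t) (y1 t) (x2 t) (y2 t) ltac:(lra) ltac:(lra) ltac:(lra) ltac:(lra)).
    unfold dw, w.
    set (a := x1 t - x2 t) in *. set (b := y1 t - y2 t) in *.
    set (p := P (x1 t) (y1 t) - P (x2 t) (y2 t)) in *.
    set (q := Q (x1 t) (y1 t) - Q (x2 t) (y2 t)) in *.
    assert (Rabs p <= L * (Rabs a + Rabs b)).
    { eapply Rle_trans. exact p1. apply Rmult_le_compat_r. assert (0<= Rabs a) by apply Rabs_pos. assert (0<= Rabs b) by apply Rabs_pos. lra. lra. }
    assert (Rabs q <= L * (Rabs a + Rabs b)).
    { eapply Rle_trans. exact q1. apply Rmult_le_compat_r. assert (0<= Rabs a) by apply Rabs_pos. assert (0<= Rabs b) by apply Rabs_pos. lra. lra. }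
    assert (2 * a * p <= 2 * Rabs a * (L * (Rabs a + Rabs b))).
    { assert (a * p <= Rabs a * Rabs p).
      { rewrite <- Rabs_mult. apply Rle_abs. }
      assert (0<= Rabs a) by apply Rabs_pos.
      assert (Rabs a * Rabs p <= Rabs a * (L * (Rabs a + Rabs b))) by (apply Rmult_le_compat_l; auto). lra. }
    assert (2 * b * q <= 2 * Rabs b * (L * (Rabs a + Rabs b))).
    { assert (b * q <= Rabs b * Rabs q).
      { rewrite <- Rabs_mult. apply Rle_abs. }
      assert (0<= Rabs b) by apply Rabs_pos.
      assert (Rabs b * Rabs q <= Rabs b * (L * (Rabs a + Rabs b))) by (apply Rmult_le_compat_l; auto). lra. }
    assert (Ha2 : Rabs a * Rabs a = a^2) by (rewrite <- Rabs_mult; rewrite Rabs_pos_eq; [ring| nra]).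
    assert (Hb2 : Rabs b * Rabs b = b^2) by (rewrite <- Rabs_mult; rewrite Rabs_pos_eq; [ring| nra]).
    assert (Hsq := pow2_ge_0 (Rabs a - Rabs b)).
    assert (2 * Rabs a * Rabs b <= a^2 + b^2) by nra.
    assert (0 <= L) by lra.
    assert (L * (2 * Rabs a * Rabs b) <= L * (a^2 + b^2)) by (apply Rmult_le_compat_l; lra).
    assert (E1 : 2 * Rabs a * (L * (Rabs a + Rabs b)) + 2 * Rabs b * (L * (Rabs a + Rabs b))
       = 2 * L * (Rabs a * Rabs a) + 2 * L * (Rabs b * Rabs b) + 2 * (L * (2 * Rabs a * Rabs b))) by ring.
    rewrite Ha2, Hb2 in E1. lra. }
  exists e. split; auto. intros t Ht.
  assert (Hw : w t = 0).
  { destruct (Req_dec t t0) as [->|Hne].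
    { unfold w. rewrite Ex, Ey. ring. }
    destruct (MVT_gen g t0 t (fun s => (dw s - 4 * L * w s) * exp (- (4 * L) * s))) as [c [Hc Ec]].
    - intros; apply Dg.
    - intros s _. apply cont_pt_of_ex. eexists; apply Dg.
    - rewrite Rmin_left, Rmax_right in Hc by lra.
      assert (dw c - 4 * L * w c <= 0) by (assert (dw c <= 4 * L * w c) by (apply Bd; lra); lra).
      assert (0 < exp (- (4 * L) * c)) by apply exp_pos.
      assert (g t0 = 0) by (unfold g, w; rewrite Ex, Ey; ring).
      assert (Hneg : (dw c - 4 * L * w c) * exp (- (4 * L) * c) <= 0) by nra.
      assert (Htt : 0 < t - t0) by lra.
      assert (Hgt : g t <= 0) by (rewrite H1 in Ec; nra).
      assert (Hex : 0 < exp (- (4 * L) * t)) by apply exp_pos.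
      assert (Hw0 : 0 <= w t) by (unfold w; apply Rplus_le_le_0_compat; apply pow2_ge_0).
      unfold g in Hgt. destruct (Rle_lt_dec (w t) 0) as [Hl|Hl]; [lra|].
      assert (0 < w t * exp (- (4 * L) * t)) by (apply Rmult_lt_0_compat; auto). lra. }
  unfold w in Hw. assert (Z1 := pow2_ge_0 (x1 t - x2 t)). assert (Z2 := pow2_ge_0 (y1 t - y2 t)).
  split; nra.
Qed.

Lemma left_lim f t0 m : t0 < m -> continuity_pt f m -> (forall u, t0 <= u < m -> f u = 0) -> f m = 0.
Proof.
  intros Hm C H. destruct (Req_dec (f m) 0) as [|Hn]; auto. exfalso.
  assert (Hp : 0 < Rabs (f m)) by (apply Rabs_pos_lt; auto).
  destruct (proj1 (continuity_pt_locally f m) C (mkposreal _ Hp)) as [d Hd].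
  set (u := Rmax t0 (m - d / 2)).
  assert (Hd0 := cond_pos d).
  assert (Hu1 : t0 <= u) by apply Rmax_l. assert (Hu2 : m - d/2 <= u) by apply Rmax_r.
  assert (Hu3 : u < m) by (unfold u; apply Rmax_lub_lt; lra).
  assert (B : Rabs (f u - f m) < Rabs (f m)).
  { apply (Hd u). change (Rabs (u - m) < d). rewrite Rabs_left by lra. lra. }
  rewrite H in B by lra. rewrite Rminus_0_l, Rabs_Ropp in B. lra.
Qed.

Lemma fwd_global P Q x1 y1 x2 y2 t0 : LL P -> LL Q -> sol P Q x1 y1 -> sol P Q x2 y2 ->
  x1 t0 = x2 t0 -> y1 t0 = y2 t0 ->
  forall t1, t0 <= t1 -> x1 t1 = x2 t1 /\ y1 t1 = y2 t1.
Proof.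
  intros HP HQ S1 S2 Ex Ey t1 Ht1.
  set (G := fun t => t0 <= t <= t1 /\ forall u, t0 <= u <= t -> x1 u = x2 u /\ y1 u = y2 u).
  assert (Hb : bound G) by (exists t1; intros t [Ht _]; lra).
  assert (Hne : exists t, G t) by (exists t0; split; [lra| intros u Hu; replace u with t0 by lra; auto]).
  destruct (completeness G Hb Hne) as [m [Hub Hlub]].
  assert (Hm0 : t0 <= m) by (apply Hub; destruct Hne as [t Gt]; unfold G; split; [lra| intros u Hu; replace u with t0 by lra; auto]).
  assert (Hm1 : m <= t1) by (apply Hlub; intros t [Ht _]; lra).
  assert (Hbelow : forall u, t0 <= u < m -> x1 u = x2 u /\ y1 u = y2 u).
  { intros u Hu. destruct (Rle_lt_dec u t0).
    - replace u with t0 by lra; auto.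
    - apply NNPP. intros Hn.
      assert (Hub' : is_upper_bound G u).
      { intros t [Gt1 Gt2]. destruct (Rle_lt_dec t u); auto. exfalso. apply Hn, Gt2. lra. }
      specialize (Hlub u Hub'). lra. }
  assert (Hat : x1 m = x2 m /\ y1 m = y2 m).
  { destruct (Req_dec t0 m) as [<-|Hneq]; [auto|].
    split.
    - apply Rminus_diag_uniq. apply (left_lim (fun s => x1 s - x2 s) t0 m); [lra| |].
      + apply continuity_pt_minus; apply cont_pt_of_ex; [apply (sol_ex _ _ _ _ m S1)| apply (sol_ex _ _ _ _ m S2)].
      + intros u Hu. destruct (Hbelow u Hu) as [-> _]. ring.
    - apply Rminus_diag_uniq. apply (left_lim (fun s => y1 s - y2 s) t0 m); [lra| |].
      + apply continuity_pt_minus; apply cont_pt_of_ex; [apply (sol_ex _ _ _ _ m S1)| apply (sol_ex _ _ _ _ m S2)].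
      + intros u Hu. destruct (Hbelow u Hu) as [_ ->]. ring. }
  destruct (Req_dec m t1) as [<-|Hlt]; [exact Hat|].
  exfalso.
  destruct (fwd_local P Q x1 y1 x2 y2 m HP HQ S1 S2 (proj1 Hat) (proj2 Hat)) as [e [He Hloc]].
  assert (Gm : G (Rmin (m + e) t1)).
  { split. split. apply Rmin_glb; lra. apply Rmin_r.
    intros u Hu. destruct (Rlt_le_dec u m).
    - apply Hbelow; lra.
    - apply Hloc. assert (Rmin (m + e) t1 <= m + e) by apply Rmin_l. lra. }
  specialize (Hub _ Gm).
  assert (m < Rmin (m + e) t1) by (apply Rmin_glb_lt; lra). lra.
Qed.

Lemma sol_rev P Q x y : sol P Q x y -> sol (fun a b => - P a b) (fun a b => - Q a b) (fun t => x (- t)) (fun t => y (- t)).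
Proof.
  intros S t. destruct (S (- t)) as [A B]. split.
  - assert (H := is_derive_comp x (fun s => - s) t _ _ A (is_derive_opp _ _ _ (is_derive_id t))).
    replace (- P (x (- t)) (y (- t))) with (scal (opp (one : R_AbsRing)) (P (x (- t)) (y (- t)))). exact H.
    rewrite (scal_opp_one (K := R_AbsRing) (V := R_NormedModule)). reflexivity.
  - assert (H := is_derive_comp y (fun s => - s) t _ _ B (is_derive_opp _ _ _ (is_derive_id t))).
    replace (- Q (x (- t)) (y (- t))) with (scal (opp (one : R_AbsRing)) (Q (x (- t)) (y (- t)))). exact H.
    rewrite (scal_opp_one (K := R_AbsRing) (V := R_NormedModule)). reflexivity.
Qed.

Lemma LL_opp F : LL F -> LL (fun a b => - F a b).
Proof.
  intros H a b. destruct (H a b) as [d [L [Hd [HL HH]]]]. exists d, L. split; auto. split; auto.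
  intros. replace (- F u1 v1 - - F u2 v2) with (- (F u1 v1 - F u2 v2)) by ring.
  rewrite Rabs_Ropp. auto.
Qed.

Lemma uniq P Q x1 y1 x2 y2 t0 : LL P -> LL Q -> sol P Q x1 y1 -> sol P Q x2 y2 ->
  x1 t0 = x2 t0 -> y1 t0 = y2 t0 -> forall t, x1 t = x2 t /\ y1 t = y2 t.
Proof.
  intros HP HQ S1 S2 Ex Ey t. destruct (Rle_lt_dec t0 t).
  - apply (fwd_global P Q x1 y1 x2 y2 t0); auto.
  - assert (H := fwd_global _ _ _ _ _ _ (- t0) (LL_opp P HP) (LL_opp Q HQ) (sol_rev _ _ _ _ S1) (sol_rev _ _ _ _ S2)).
    simpl in H. rewrite Ropp_involutive in H. specialize (H Ex Ey (- t) ltac:(lra)).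
    rewrite Ropp_involutive in H. exact H.
Qed.

Section Orb.
Variables (P Q : R -> R -> R) (sP : smooth2 P) (sQ : smooth2 Q).

Definition hD (g : R -> R -> R) := fun a b => pdx g a b * P a b + pdy g a b * Q a b.

Lemma hD_smooth g : smooth2 g -> smooth2 (hD g).
Proof.
  intros H. unfold hD. apply smooth2_plus; apply smooth2_mult; auto.
  apply smooth2_pdx; auto. apply smooth2_pdy; auto.
Qed.

Lemma comp_deriv x y g t : sol P Q x y -> smooth2 g ->
  is_derive (fun s => g (x s) (y s)) t (hD g (x t) (y t)).
Proof.
  intros S Hg. destruct (S t) as [A B]. unfold hD. apply chain2; auto.
Qed.

Lemma comp_n x y : sol P Q x y -> forall n g, smooth2 g -> exists h, smooth2 h /\
  forall t, ex_derive_n (fun s => g (x s) (y s)) n t /\ Derive_n (fun s => g (x s) (y s)) n t = h (x t) (y t).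
Proof.
  intros S n. induction n; intros g Hg.
  - exists g. split; auto. intros t; split; simpl; auto.
  - destruct (IHn g Hg) as [h [Hh E]].
    exists (hD h). split. apply hD_smooth; auto.
    intros t. split.
    + simpl. apply ex_derive_ext with (fun s => h (x s) (y s)).
      intros s; symmetry; apply E.
      eexists. apply comp_deriv; auto.
    + simpl. rewrite (Derive_ext (Derive_n (fun s => g (x s) (y s)) n) (fun s => h (x s) (y s))).
      apply is_derive_unique. apply comp_deriv; auto.
      intros s; apply E.
Qed.

Lemma sol_smooth1 x y : sol P Q x y -> smooth1 x /\ smooth1 y.
Proof.
  intros S. split; intros n t.
  - destruct (comp_n x y S n (fun a _ => a) (fun k => Ck_proj1 k)) as [h [_ E]]. exact (proj1 (E t)).
  - destruct (comp_n x y S n (fun _ b => b) (fun k => Ck_proj2 k)) as [h [_ E]]. exact (proj1 (E t)).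
Qed.

End Orb.

Lemma sol_shift P Q x y c : sol P Q x y -> sol P Q (fun t => x (t + c)) (fun t => y (t + c)).
Proof.
  intros S t. destruct (S (t + c)) as [A B].
  assert (Hd : is_derive (fun s : R => s + c) t 1).
  { apply is_derive_Reals. replace 1 with (1 + 0) by ring. apply derivable_pt_lim_plus.
    apply derivable_pt_lim_id. apply derivable_pt_lim_const. }
  split.
  - assert (H := is_derive_comp x (fun s => s + c) t _ _ A Hd).
    replace (P (x (t + c)) (y (t + c))) with (scal (1 : R_AbsRing) (P (x (t + c)) (y (t + c)))). exact H.
    rewrite (scal_one (K := R_AbsRing) (V := R_NormedModule)). reflexivity.
  - assert (H := is_derive_comp y (fun s => s + c) t _ _ B Hd).
    replace (Q (x (t + c)) (y (t + c))) with (scal (1 : R_AbsRing) (Q (x (t + c)) (y (t + c)))). exact H.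
    rewrite (scal_one (K := R_AbsRing) (V := R_NormedModule)). reflexivity.
Qed.

Definition per (x y : R -> R) (tau : R) := forall t, x (t + tau) = x t /\ y (t + tau) = y t.

Lemma per_sub x y a b : per x y a -> per x y b -> per x y (a - b).
Proof.
  intros Ha Hb t. destruct (Ha (t - b)) as [A1 A2]. destruct (Hb (t - b)) as [B1 B2].
  replace (t - b + a) with (t + (a - b)) in A1, A2 by ring.
  replace (t - b + b) with t in B1, B2 by ring. split; congruence.
Qed.

Lemma small_period_deriv f t0 l : is_derive f t0 l ->
  (forall eps, 0 < eps -> exists tau, 0 < tau < eps /\ f (t0 + tau) = f t0) -> l = 0.
Proof.
  intros H Hs. apply is_derive_Reals in H.
  destruct (Req_dec l 0) as [|Hn]; auto. exfalso.
  assert (Hp : 0 < Rabs l) by (apply Rabs_pos_lt; auto).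
  destruct (H (Rabs l) Hp) as [d Hd].
  destruct (Hs d (cond_pos d)) as [tau [Ht E]].
  assert (K := Hd tau ltac:(lra) ltac:(rewrite Rabs_pos_eq; lra)).
  rewrite E in K. replace ((f t0 - f t0) / tau - l) with (- l) in K by (field; lra).
  rewrite Rabs_Ropp in K. lra.
Qed.

Section Orb2.
Variables (P Q : R -> R -> R) (sP : smooth2 P) (sQ : smooth2 Q).
Variables (x y : R -> R) (T : R).
Hypotheses (HT : 0 < T) (S : sol P Q x y) (HperT : per x y T)
  (Hnc : exists t, (x t, y t) <> (x 0, y 0)).

Lemma nonvan t : P (x t) (y t) <> 0 \/ Q (x t) (y t) <> 0.
Proof.
  apply NNPP. intros Hn. apply not_or_and in Hn. destruct Hn as [H1 H2].
  apply NNPP in H1. apply NNPP in H2.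
  assert (Sc : sol P Q (fun _ => x t) (fun _ => y t)).
  { intros s. split; rewrite ?H1, ?H2; apply is_derive_Reals; apply derivable_pt_lim_const. }
  assert (U := uniq P Q x y (fun _ => x t) (fun _ => y t) t (smooth2_LL P sP) (smooth2_LL Q sQ) S Sc eq_refl eq_refl).
  destruct Hnc as [s Hs]. apply Hs. destruct (U s) as [-> ->]. destruct (U 0) as [-> ->]. reflexivity.
Qed.

Definition LB := fun s => forall tau, 0 < tau -> per x y tau -> s <= tau.

Lemma minper : exists m, 0 < m /\ per x y m /\ forall tau, 0 < tau -> per x y tau -> m <= tau.
Proof.
  assert (Hb : bound LB) by (exists T; intros s Hs; apply Hs; auto).
  assert (Hne : exists s, LB s) by (exists 0; intros tau Ht _; lra).
  destruct (completeness LB Hb Hne) as [m [Hub Hlub]].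
  assert (Hlow : forall tau, 0 < tau -> per x y tau -> m <= tau).
  { intros tau Ht Hp. apply Hlub. intros s Hs. apply Hs; auto. }
  assert (Hclose : forall s, m < s -> exists tau, 0 < tau /\ per x y tau /\ tau < s).
  { intros s Hs. apply NNPP. intros Hn.
    assert (LB s).
    { intros tau Ht Hp. destruct (Rle_lt_dec s tau); auto. exfalso. apply Hn. exists tau. auto. }
    specialize (Hub s H). lra. }
  assert (Hm : 0 < m).
  { destruct (Rlt_le_dec 0 m); auto. exfalso.
    assert (Hsm : forall eps, 0 < eps -> exists tau, 0 < tau < eps /\ per x y tau).
    { intros eps He. destruct (Hclose eps ltac:(lra)) as [tau [A [B C]]]. exists tau; split; auto. }
    destruct (S 0) as [Dx Dy].
    destruct (nonvan 0) as [Hn|Hn]; apply Hn.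
    - apply (small_period_deriv x 0); auto. intros eps He. destruct (Hsm eps He) as [tau [A B]].
      exists tau. split; auto. rewrite Rplus_0_l. replace tau with (0 + tau) at 1 by ring. apply B.
    - apply (small_period_deriv y 0); auto. intros eps He. destruct (Hsm eps He) as [tau [A B]].
      exists tau. split; auto. rewrite Rplus_0_l. replace tau with (0 + tau) at 1 by ring. apply B. }
  exists m. split; auto. split; auto.
  apply NNPP. intros Hnp.
  destruct (Hclose (2 * m) ltac:(lra)) as [t1 [A1 [B1 C1]]].
  assert (m < t1).
  { destruct (Rle_lt_dec t1 m); auto. assert (t1 = m) by (assert (m <= t1) by auto; lra).
    subst t1. contradiction. }
  destruct (Hclose t1 H) as [t2 [A2 [B2 C2]]].
  assert (m <= t2) by auto.
  assert (m <= t1 - t2) by (apply Hlow; [lra| apply per_sub; auto]).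
  lra.
Qed.

Lemma inj_lt m : (forall tau, 0 < tau -> per x y tau -> m <= tau) ->
  forall s t, 0 <= s -> s < t -> t < m -> x s = x t -> y s = y t -> False.
Proof.
  intros Hmin s t Hs Hst Htm Ex Ey.
  assert (Ssh := sol_shift P Q x y (t - s) S).
  assert (U := uniq P Q x y (fun u => x (u + (t - s))) (fun u => y (u + (t - s))) s (smooth2_LL P sP) (smooth2_LL Q sQ) S Ssh).
  assert (E' : s + (t - s) = t) by ring.
  specialize (U ltac:(simpl; rewrite E'; exact Ex) ltac:(simpl; rewrite E'; exact Ey)).
  assert (per x y (t - s)) by (intros u; destruct (U u); split; auto).
  assert (m <= t - s) by (apply Hmin; auto; lra). lra.
Qed.

End Orb2.

Lemma orbit_curve P Q O : smooth2 P -> smooth2 Q -> closed_orbit P Q O -> smooth_closed_curve O.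
Proof.
  intros sP sQ [x [y [T [HT [Hs [Hp [Hnc HO]]]]]]].
  assert (S : sol P Q x y) by exact Hs.
  assert (Hper : per x y T) by exact Hp.
  destruct (minper P Q sP sQ x y T HT S Hper Hnc) as [m [Hm [Hpm Hmin]]].
  destruct (sol_smooth1 P Q sP sQ x y S) as [Sx Sy].
  exists x, y, m. split; auto. split; auto. split; auto. split; [exact Hpm|].
  split.
  { intros s t Hs1 Ht1 Ex Ey. destruct (Rtotal_order s t) as [Hlt|[Heq|Hgt]]; auto.
    - exfalso. apply (inj_lt P Q sP sQ x y S m Hmin s t); auto; lra.
    - exfalso. apply (inj_lt P Q sP sQ x y S m Hmin t s); auto; lra. }
  split; auto.
  intros t. destruct (S t) as [A B].
  rewrite (is_derive_unique _ _ _ A), (is_derive_unique _ _ _ B).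
  apply (nonvan P Q sP sQ x y S Hnc).
Qed.

Lemma orbit_disjoint P Q O1 O2 : smooth2 P -> smooth2 Q -> closed_orbit P Q O1 -> closed_orbit P Q O2 ->
  ~ (forall p, O1 p <-> O2 p) -> forall p, ~ (O1 p /\ O2 p).
Proof.
  intros sP sQ [x1 [y1 [T1 [HT1 [Hs1 [Hp1 [Hnc1 HO1]]]]]]] [x2 [y2 [T2 [HT2 [Hs2 [Hp2 [Hnc2 HO2]]]]]]] Hd p [I1 I2].
  apply Hd.
  destruct (proj1 (HO1 p) I1) as [s Es]. destruct (proj1 (HO2 p) I2) as [t Et].
  rewrite Es in Et. injection Et as Ex Ey.
  assert (Ssh := sol_shift P Q x2 y2 (t - s) Hs2).
  assert (E' : s + (t - s) = t) by ring.
  assert (U := uniq P Q x1 y1 _ _ s (smooth2_LL P sP) (smooth2_LL Q sQ) Hs1 Ssh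
     ltac:(simpl; rewrite E'; exact Ex) ltac:(simpl; rewrite E'; exact Ey)).
  simpl in U.
  intros q. rewrite HO1, HO2. split.
  - intros [u ->]. exists (u + (t - s)). destruct (U u) as [-> ->]. reflexivity.
  - intros [v ->]. exists (v - (t - s)). destruct (U (v - (t - s))) as [-> ->].
    replace (v - (t - s) + (t - s)) with v by ring. reflexivity.
Qed.

Fixpoint pol (a : nat -> R) (n : nat) (s : R) : R :=
  match n with
  | O => 0
  | S m => pol a m s + a m * s ^ m
  end.

Lemma pol_ext a b n s : (forall k, (k < n)%nat -> a k = b k) -> pol a n s = pol b n s.
Proof.
  induction n; intros H; simpl; auto.
  rewrite IHn by (intros; apply H; lia). rewrite H by lia. reflexivity.
Qed.

Lemma pol_zero a n s : (forall k, (k < n)%nat -> a k = 0) -> pol a n s = 0.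
Proof.
  intros H. rewrite (pol_ext a (fun _ => 0)) by auto. clear H.
  induction n; simpl; auto. rewrite IHn. ring.
Qed.

Lemma pol_add a b n s : pol (fun k => a k + b k) n s = pol a n s + pol b n s.
Proof. induction n; simpl; [ring|]. rewrite IHn. ring. Qed.

Lemma pol_scal c a n s : pol (fun k => c * a k) n s = c * pol a n s.
Proof. induction n; simpl; [ring|]. rewrite IHn. ring. Qed.

Lemma pol_shift a n s : pol a (S n) s = a 0%nat + s * pol (fun k => a (S k)) n s.
Proof.
  induction n.
  - simpl. ring.
  - change (pol a (S (S n)) s) with (pol a (S n) s + a (S n) * s ^ (S n)).
    rewrite IHn. simpl. ring.
Qed.

Lemma pol_geo n s r : s ^ (S n) - r ^ (S n) = (s - r) * pol (fun k => r ^ (n - k)) (S n) s.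
Proof.
  induction n.
  - simpl. ring.
  - change (pol (fun k => r ^ (S n - k)) (S (S n)) s) with
      (pol (fun k => r ^ (S n - k)) (S n) s + r ^ (S n - S n) * s ^ (S n)).
    rewrite (pol_ext (fun k => r ^ (S n - k)) (fun k => r * r ^ (n - k))).
    2:{ intros k Hk. replace (S n - k)%nat with (S (n - k)) by lia. reflexivity. }
    rewrite pol_scal. replace (S n - S n)%nat with 0%nat by lia.
    replace (s ^ S (S n) - r ^ S (S n)) with (r * (s ^ S n - r ^ S n) + s ^ (S n) * (s - r)) by (simpl; ring).
    rewrite IHn. simpl. ring.
Qed.

Lemma pol_div n a r : exists b, forall s, pol a (S n) s = pol a (S n) r + (s - r) * pol b n s.
Proof.
  revert a. induction n; intros a.
  - exists (fun _ => 0). intros s. simpl. ring.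
  - destruct (IHn a) as [b Hb].
    exists (fun k => (if Nat.ltb k n then b k else 0) + a (S n) * r ^ (n - k)).
    intros s.
    rewrite pol_add, pol_scal.
    change (pol (fun k => if Nat.ltb k n then b k else 0) (S n) s) with
      (pol (fun k => if Nat.ltb k n then b k else 0) n s + (if Nat.ltb n n then b n else 0) * s ^ n).
    rewrite (pol_ext (fun k => if Nat.ltb k n then b k else 0) b).
    2:{ intros k Hk. destruct (Nat.ltb_spec k n); [reflexivity| lia]. }
    destruct (Nat.ltb_spec n n); [lia|].
    change (pol a (S (S n)) s) with (pol a (S n) s + a (S n) * s ^ (S n)).
    change (pol a (S (S n)) r) with (pol a (S n) r + a (S n) * r ^ (S n)).
    rewrite (Hb s).
    assert (G := pol_geo n s r).
    replace (a (S n) * s ^ S n) with (a (S n) * (s ^ S n - r ^ S n) + a (S n) * r ^ S n) by ring.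
    rewrite G. ring.
Qed.

Lemma pol_roots : forall n a (r : nat -> R),
  (forall i j, (i < n)%nat -> (j < n)%nat -> i <> j -> r i <> r j) ->
  (forall j, (j < n)%nat -> pol a n (r j) = 0) ->
  forall k, (k < n)%nat -> a k = 0.
Proof.
  induction n; intros a r Hd Hr k Hk; [lia|].
  destruct (pol_div n a (r n)) as [b Hb].
  assert (Hbz : forall k, (k < n)%nat -> b k = 0).
  { apply (IHn b r).
    - intros; apply Hd; lia.
    - intros j Hj. assert (E := Hb (r j)). rewrite Hr in E by lia. rewrite (Hr n) in E by lia.
      assert (r j - r n <> 0) by (apply Rminus_eq_contra; apply Hd; lia).
      assert (E2 : (r j - r n) * pol b n (r j) = 0) by lra.
      apply Rmult_integral in E2 as [|]; [contradiction|auto]. }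
  assert (Hall : forall s, pol a (S n) s = 0).
  { intros s. rewrite Hb, (Hr n) by lia. rewrite (pol_zero b) by auto. ring. }
  assert (Ha0 : a 0%nat = 0).
  { assert (E := Hall 0). rewrite pol_shift in E. lra. }
  destruct k; auto.
  apply (IHn (fun k => a (S k)) (fun j => INR (S j))).
  - intros i j Hi Hj Hij. intros E. apply INR_eq in E. lia.
  - intros j Hj. assert (E := Hall (INR (S j))). rewrite pol_shift, Ha0 in E.
    assert (INR (S j) <> 0) by (apply not_0_INR; lia).
    assert (E2 : INR (S j) * pol (fun k => a (S k)) n (INR (S j)) = 0) by lra.
    apply Rmult_integral in E2 as [|]; [contradiction|auto].
  - lia.
Qed.

Lemma core P Q (O : nat -> R2 -> Prop) n (phi : R -> R -> R) (a : nat -> R) W :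
  smooth2 P -> smooth2 Q -> smooth2 W ->
  (forall i, (i < n)%nat -> closed_orbit P Q (O i)) ->
  (forall i j, (i < n)%nat -> (j < n)%nat -> i <> j -> forall p q : R2, O i p -> O j q ->
     phi (fst p) (snd p) <> phi (fst q) (snd q)) ->
  (forall x y, pol a n (phi x y) = P x y * pdx W x y + Q x y * pdy W x y) ->
  forall k, (k < n)%nat -> a k = 0.
Proof.
  intros sP sQ sW Horb Hsep Heq.
  assert (Hroot : forall j, (j < n)%nat -> exists p, O j p /\ pol a n (phi (fst p) (snd p)) = 0).
  { intros j Hj. destruct (Horb j Hj) as [x [y [T [HT [Hs [Hp [Hnc HO]]]]]]].
    set (df := fun t => pdx W (x t) (y t) * P (x t) (y t) + pdy W (x t) (y t) * Q (x t) (y t)).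
    assert (Dg : forall t, is_derive (fun s => W (x s) (y s)) t (df t)).
    { intros t. destruct (Hs t) as [A1 B1]. apply chain2; auto. }
    destruct (MVT_gen (fun s => W (x s) (y s)) 0 T df) as [c [Hc Ec]].
    - intros; apply Dg.
    - intros; apply cont_pt_of_ex; eexists; apply Dg.
    - destruct (Hp 0) as [E1 E2]. rewrite Rplus_0_l in E1, E2.
      simpl in Ec. rewrite E1, E2 in Ec.
      exists (x c, y c). split. apply HO. exists c; reflexivity.
      simpl. rewrite Heq. assert (df c = 0).
      { assert (df c * (T - 0) = 0) by lra. apply Rmult_integral in H as [|]; auto. lra. }
      unfold df in H. lra. }
  assert (Hch : forall j, exists p : R2, (j < n)%nat -> O j p /\ pol a n (phi (fst p) (snd p)) = 0).
  { intros j. destruct (classic (j < n)%nat) as [Hj|Hj].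
    - destruct (Hroot j Hj) as [p Hp]. exists p; auto.
    - exists (0, 0). intros; contradiction. }
  destruct (functional_choice _ Hch) as [pf Hpf].
  apply (pol_roots n a (fun j => phi (fst (pf j)) (snd (pf j)))).
  - intros i j Hi Hj Hij. apply (Hsep i j Hi Hj Hij); [apply Hpf| apply Hpf]; auto.
  - intros j Hj. apply Hpf; auto.
Qed.

Fixpoint upow (f : Cfun) (k : nat) : Cfun :=
  match k with
  | O => fun _ _ => RtoC 1
  | S m => fun x y => Cmult (f x y) (upow f m x y)
  end.

Lemma upow_A A f : is_subalgebra A -> A f -> forall k, A (upow f k).
Proof.
  intros [H1 [H2 [H3 [H4 H5]]]] Hf k. induction k; simpl; auto.
Qed.

Lemma upow_val f : (forall x y, Im (f x y) = 0) -> forall k x y,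
  upow f k x y = RtoC (Re (f x y) ^ k).
Proof.
  intros Hf k x y. induction k; simpl; auto.
  rewrite IHk. destruct (f x y) as [a b] eqn:E. simpl. specialize (Hf x y). rewrite E in Hf. simpl in Hf. subst b.
  unfold Cmult, RtoC. simpl. f_equal; ring.
Qed.

Lemma csum_re_im (c : nat -> C) (f : Cfun) n x y : (forall x y, Im (f x y) = 0) ->
  Re (csum n (fun i => Cmult (c i) (upow f i x y))) = pol (fun i => Re (c i)) n (Re (f x y)) /\
  Im (csum n (fun i => Cmult (c i) (upow f i x y))) = pol (fun i => Im (c i)) n (Re (f x y)).
Proof.
  intros Hf. induction n.
  - simpl. split; reflexivity.
  - simpl. destruct IHn as [I1 I2]. rewrite upow_val by auto.
    destruct (csum n (fun i => Cmult (c i) (upow f i x y))) as [u v]. simpl in I1, I2 |- *.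
    destruct (c n) as [p q]. simpl. rewrite <- I1, <- I2. split; ring.
Qed.

Theorem mainTheorem2 :
  forall (P Q : R -> R -> R) (A : Cfun -> Prop),
    smooth2 P -> smooth2 Q ->
    is_subalgebra A -> self_adjoint A -> separates_compact_submanifolds A ->
    (forall U, A U -> A (Dop P Q U)) ->
    forall (n : nat) (O : nat -> R2 -> Prop),
      (forall i, (i < n)%nat -> closed_orbit P Q (O i)) ->
      (forall i j, (i < n)%nat -> (j < n)%nat -> i <> j -> ~ (forall p, O i p <-> O j p)) ->
      exists u : nat -> Cfun,
        (forall i, (i < n)%nat -> A (u i)) /\
        (forall c : nat -> C,
           (exists V, A V /\ forall x y, csum n (fun i => Cmult (c i) (u i x y)) = Dop P Q V x y) ->
           forall i, (i < n)%nat -> c i = RtoC 0).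
Proof.
  intros P Q A sP sQ Hsub _ Hsep HD n O Horb Hdist.
  destruct (Hsep n O) as [f [Af [Imf Sf]]].
  { intros i Hi. apply (orbit_curve P Q); auto. }
  { intros i j Hi Hj Hij p. apply (orbit_disjoint P Q); auto. }
  exists (upow f). split.
  { intros i _. apply upow_A; auto. }
  intros c [V [AV EV]] i Hi.
  destruct Hsub as [Hsm _]. destruct (Hsm V AV) as [SRe SIm].
  assert (Hphi : forall i j, (i < n)%nat -> (j < n)%nat -> i <> j -> forall p q : R2, O i p -> O j q ->
     Re (f (fst p) (snd p)) <> Re (f (fst q) (snd q))).
  { intros i' j' Hi' Hj' Hij p q Op Oq Er. apply (Sf i' j' Hi' Hj' Hij p q Op Oq).
    assert (Ip := Imf (fst p) (snd p)). assert (Iq := Imf (fst q) (snd q)).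
    destruct (f (fst p) (snd p)) as [a1 b1]. destruct (f (fst q) (snd q)) as [a2 b2].
    simpl in *. subst. reflexivity. }
  assert (R1 : forall k, (k < n)%nat -> Re (c k) = 0).
  { apply (core P Q O n (fun x y => Re (f x y)) (fun i => Re (c i)) (fun x y => Re (V x y))); auto.
    intros x y. rewrite <- (proj1 (csum_re_im c f n x y Imf)). rewrite EV.
    unfold Dop, pdxC, pdyC. simpl. ring. }
  assert (R2 : forall k, (k < n)%nat -> Im (c k) = 0).
  { apply (core P Q O n (fun x y => Re (f x y)) (fun i => Im (c i)) (fun x y => Im (V x y))); auto.
    intros x y. rewrite <- (proj2 (csum_re_im c f n x y Imf)). rewrite EV.
    unfold Dop, pdxC, pdyC. simpl. ring. }
  specialize (R1 i Hi). specialize (R2 i Hi). destruct (c i) as [p q]. simpl in R1, R2. subst. reflexivity.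
Qed.
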